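(* Let $\mu_c$ be the 1-D Gaussian mixture below with $p=1/2$ and $\sigma_1=\sigma_2=\sigma$, and let $u>0$ with $|\gamma_1+\gamma_2|\le 2u$. For $\epsilon>0$ consider $$\max_{\mu_p\in\mathcal{Q}(u)}\big[L(h_{1,b_p};\mu_c)+\epsilon L(h_{1,b_p};\mu_p)\big],\qquad b_p=\arg\min_{b\in\mathbb{R}}\big[L(h_{1,b};\mu_c)+\epsilon L(h_{1,b};\mu_p)\big].$$ Then there exists $\alpha\in[0,1]$ such that the optimal value of this problem is attained at $\mu_p=\nu_\alpha$.
   Context: Data model: $(x,y)\in\mathbb{R}\times\{-1,+1\}$ with $y=-1,\ x\sim\mathcal{N}(\gamma_1,\sigma_1^2)$ with probability $p$, and $y=+1,\ x\sim\mathcal{N}(\gamma_2,\sigma_2^2)$ with probability $1-p$. $h_{w,b}(x)=\mathrm{sgn}(wx+b)$ with $w\in\{-1,1\}$, $b\in\mathbb{R}$. Hinge loss $\ell(h_{w,b};x,y)=\max\{0,1-y(wx+b)\}$; $L(h;\mu)=\mathbb{E}_\mu[\ell(h;x,y)]$. $\mathcal{Q}(u)$ is the set of distributions supported on $[-u,u]\times\{-1,+1\}$. Two-point distribution $\nu_\alpha$: $(x,y)=(-u,+1)$ with probability $\alpha$ and $(u,-1)$ with probability $1-\alpha$. *)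

(* Defs.v *)
From HB Require Import structures.
From mathcomp Require Import all_boot all_order all_algebra.
From mathcomp Require Import all_classical all_reals all_analysis.
Set Implicit Arguments. Unset Strict Implicit. Unset Printing Implicit Defensive.
Import Order.TTheory GRing.Theory Num.Theory.
Local Open Scope classical_set_scope.
Local Open Scope ring_scope.

Section defs.
Context {R : realType}.

(* hinge loss of h_{w,b}(x) = sgn(w x + b) at the labelled point z = (x, y) *)
Definition hinge (w b : R) (z : R * R) : R := Num.max 0 (1 - z.2 * (w * z.1 + b)).

Definition Lmu (mu : probability (R * R)%type R) (w b : R) : \bar R :=
  (\int[mu]_z (hinge w b z)%:E)%E.

(* L(h_{w,b}; mu_c) for the Gaussian mixture mu_c :
   y = -1, x ~ N(g1, s1^2) w.p. p ;  y = +1, x ~ N(g2, s2^2) w.p. 1-p *)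
Definition Lmix (p g1 g2 s1 s2 w b : R) : \bar R :=
  (p%:E * (\int[normal_prob g1 s1]_x (hinge w b (x, -1)%R)%:E) +
   (1 - p)%R%:E * (\int[normal_prob g2 s2]_x (hinge w b (x, 1)%R)%:E))%E.

Definition inQ (u : R) (mu : probability (R * R)%type R) : Prop :=
  mu ([set z | -u <= z.1 <= u /\ (z.2 = -1 \/ z.2 = 1)]) = 1%E.

Definition is_nu (u alpha : R) (nu : probability (R * R)%type R) : Prop :=
  forall A, measurable A ->
    nu A = (alpha%:E * \d_((-u, 1)%R : R * R) A + (1 - alpha)%R%:E * \d_((u, -1)%R : R * R) A)%E.

Definition Jobj (g1 g2 s eps : R) (mu : probability (R * R)%type R) (b : R) : \bar R :=
  (Lmix (2^-1)%R g1 g2 s s 1 b + eps%:E * Lmu mu 1 b)%E.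

Definition is_argmin (f : R -> \bar R) (b : R) : Prop := forall b', (f b <= f b')%E.

End defs.

(* Main.v *)
Require Import Defs.
From HB Require Import structures.
From mathcomp Require Import all_boot all_order all_algebra.
From mathcomp Require Import all_classical all_reals all_analysis.
From mathcomp Require Import ring lra measurable_realfun.
Set Implicit Arguments. Unset Strict Implicit. Unset Printing Implicit Defensive.
Import Order.TTheory GRing.Theory Num.Theory.
Import numFieldNormedType.Exports.
Local Open Scope classical_set_scope.
Local Open Scope ring_scope.
Section realpart.
Context {R : realType}.

Lemma lip_cont (f : R -> R) (K : R) : 0 < K ->
  (forall x y, `|f x - f y| <= K * `|x - y|) -> continuous f.
Proof.
move=> K0 Hf x; apply/cvgrPdist_lt => e e0.
have he : 0 < K^-1 * e by rewrite mulr_gt0 // invr_gt0.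
near=> y.
apply: (le_lt_trans (Hf x y)).
rewrite -ltr_pdivlMl; last by [].
near: y.
exact: (@cvgr_dist_lt _ _ _ (nbhs x) _ id x (@cvg_id _ (nbhs x)) _ he).
Unshelve. all: by end_near.
Qed.

End realpart.
Section saddle.
Context {R : realType}.

Definition mx0 (x : R) := Num.max 0 x.
Definition phi (c al b : R) := al * mx0 (c - b) + (1 - al) * mx0 (c + b).

Lemma mx0_ge0 x : 0 <= mx0 x. Proof. by rewrite /mx0 le_max lexx. Qed.
Lemma mx0_ge x : x <= mx0 x. Proof. by rewrite /mx0 le_max lexx orbT. Qed.
Lemma mx0_le x y : 0 <= y -> x <= y -> mx0 x <= y.
Proof. by move=> h1 h2; rewrite /mx0 ge_max h1 h2. Qed.
Lemma mx0_id x : 0 <= x -> mx0 x = x.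
Proof. by move=> h; apply/le_anti; rewrite mx0_le // mx0_ge. Qed.

Lemma mx0_conv (l x y : R) : 0 <= l <= 1 ->
  mx0 (l * x + (1 - l) * y) <= l * mx0 x + (1 - l) * mx0 y.
Proof.
move=> /andP[l0 l1].
have hx := mx0_ge x; have hy := mx0_ge y; have hx0 := mx0_ge0 x; have hy0 := mx0_ge0 y.
apply: mx0_le; first by apply: addr_ge0; apply: mulr_ge0 => //; lra.
by apply: lerD; apply: ler_wpM2l => //; lra.
Qed.

Definition good (a : R -> R) (eps c : R) := [/\ 0 < eps, 0 < c,
  forall b, 0 <= a b, forall x y, a y <= a x + `|x - y| &
  forall x y t, 0 <= t <= 1 -> a (t * x + (1 - t) * y) <= t * a x + (1 - t) * a y].

Definition W (a : R -> R) (eps c b : R) : R := a b + eps * (c + `|b|).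

Lemma W_cont a eps c : good a eps c -> continuous (W a eps c).
Proof.
case=> eps0 c0 a0 alip aconv.
have e1 : 0 < 1 + eps by lra.
apply: (@lip_cont _ (W a eps c) (1 + eps) e1).
move=> x y; rewrite /W.
have h1 := alip x y; have h2 := alip y x; rewrite distrC in h2.
have h3 := ler_dist_dist x y.
rewrite ler_norml in h3; case/andP: h3 => h3 h4.
rewrite ler_norml; apply/andP; split.
  have : eps * (`|x| - `|y|) >= eps * (- `|x - y|) by apply: ler_wpM2l; lra.
  lra.
have : eps * (`|x| - `|y|) <= eps * (`|x - y|) by apply: ler_wpM2l; lra.
lra.
Qed.

Lemma W_min a eps c : good a eps c -> exists bs, forall b, W a eps c bs <= W a eps c b.
Proof.
move=> G; have Wc := W_cont G; case: G => eps0 c0 a0 alip aconv.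
have WE b : W a eps c b = a b + eps * (c + `|b|) by [].
set M := W a eps c 0 / eps.
have W0 : 0 <= W a eps c 0.
  by rewrite WE normr0; apply: addr_ge0 => //; apply: mulr_ge0; lra.
have hM : eps * M = W a eps c 0 by rewrite /M mulrC divfK // gt_eqF.
have M0 : 0 <= M by rewrite /M divr_ge0 //; lra.
have [bs bsI bsmin] := @EVT_min R (W a eps c) (- M) M ltac:(lra) (continuous_subspaceT Wc).
exists bs => b.
have [bI|bI] := boolP (b \in `[- M, M]); first exact: bsmin.
have : W a eps c 0 < W a eps c b.
  rewrite in_itv /= negb_and -!ltNge in bI.
  have hb : M < `|b|.
    case/orP: bI => hb.
      have -> : `|b| = - b by rewrite ltr0_norm //; lra.
      lra.
    rewrite gtr0_norm //; lra.
  have h1 : eps * M < eps * `|b| by rewrite ltr_pM2l.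
  have h2 := a0 b.
  have h3 : 0 <= eps * c by apply: mulr_ge0; lra.
  rewrite [W a eps c b]WE mulrDr; lra.
have := bsmin 0 ltac:(rewrite in_itv /=; apply/andP; split; lra).
lra.
Qed.


Lemma pos_case a eps c : good a eps c -> forall bs, 0 < bs ->
  (forall b, W a eps c bs <= W a eps c b) ->
  forall b, a bs + eps * mx0 (c + bs) <= a b + eps * mx0 (c + b).
Proof.
case=> eps0 c0 a0 alip aconv bs bs0 hmin b.
have Hs : mx0 (c + bs) = c + bs by rewrite mx0_id //; lra.
have hsW : W a eps c bs = a bs + eps * (c + bs) by rewrite /W gtr0_norm.
have [b0|b0] := leP 0 b.
  have := hmin b; rewrite hsW /W Hs (mx0_id (x := c + b)); last lra.
  by rewrite ger0_norm.
set l := (bs / 2) / (bs - b).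
have bb : 0 < bs - b by lra.
have l0 : 0 < l by rewrite /l divr_gt0 //; lra.
have l1 : l < 1 by rewrite /l ltr_pdivrMr //; lra.
have ht : l * b + (1 - l) * bs = bs / 2.
  by rewrite /l; field; rewrite gt_eqF.
have h1 := aconv b bs l ltac:(apply/andP; split; lra).
rewrite ht in h1.
have h2 := mx0_conv (c + b) (c + bs) (l:=l) ltac:(apply/andP; split; lra).
have ht2 : l * (c + b) + (1 - l) * (c + bs) = c + bs / 2.
  by rewrite -ht; ring.
rewrite ht2 mx0_id in h2; last lra.
have h3 := hmin (bs / 2); rewrite hsW /W gtr0_norm in h3; last lra.
have h2' := ler_wpM2l (ltW eps0) h2.
have key : l * (a bs + eps * (c + bs)) <= l * (a b + eps * mx0 (c + b)).
  rewrite Hs in h2'; nra.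
by rewrite Hs -(ler_pM2l l0).
Qed.


Lemma zero_case a eps c : good a eps c ->
  (forall b, W a eps c 0 <= W a eps c b) ->
  exists s, -eps <= s <= eps /\ forall b, a 0 + s * b <= a b.
Proof.
case=> eps0 c0 a0 alip aconv hmin.
have hW b : a 0 + eps * c <= a b + eps * c + eps * `|b|.
  by have := hmin b; rewrite /W normr0 addr0 mulrDr addrA.
pose sl b := (a b - a 0) / b.
have slE b : b != 0 -> sl b * b = a b - a 0 by move=> hb; rewrite /sl divfK.
have hC b : b < 0 -> sl b <= eps.
  move=> b0; have := hW b; rewrite ltr0_norm // => h.
  have := slE b (negbT (lt_eqF b0)); nra.
have hD d : 0 < d -> - eps <= sl d.
  move=> d0; have := hW d; rewrite gtr0_norm // => h.
  have := slE d (negbT (gt_eqF d0)); nra.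
have hB b d : b < 0 -> 0 < d -> sl b <= sl d.
  move=> b0 d0.
  have dd : 0 < d - b by lra.
  set l := d / (d - b).
  have l0 : 0 <= l by rewrite /l divr_ge0 //; lra.
  have l1 : l <= 1 by rewrite /l ler_pdivrMr //; lra.
  have hl : l * b + (1 - l) * d = 0 by rewrite /l; field; rewrite gt_eqF.
  have h := aconv b d l ltac:(apply/andP; split; lra).
  rewrite hl in h.
  have h' := ler_wpM2l (ltW dd) h.
  have e1 : (d - b) * l = d by rewrite /l mulrC divfK // gt_eqF.
  have e2 : (d - b) * (l * a b + (1 - l) * a d) = d * a b - b * a d.
    have e3 : (d - b) * (1 - l) = - b by rewrite mulrBr mulr1 e1; ring.
    transitivity (((d - b) * l) * a b + ((d - b) * (1 - l)) * a d); first ring.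
    by rewrite e1 e3; ring.
  rewrite e2 in h'.
  have := slE b (negbT (lt_eqF b0)); have := slE d (negbT (gt_eqF d0)).
  move=> h1 h2.
  have H : b * d * (sl b - sl d) >= 0 by nra.
  have bd : b * d < 0 by rewrite pmulr_llt0.
  by move: H; rewrite mulrC nmulr_lge0 // subr_le0.
pose E := [set x | exists2 b, b < 0 & x = sl b].
have En : E !=set0 by exists (sl (-1)); exists (-1) => //; lra.
have Eub : ubound E eps by move=> x [b b0 ->]; exact: hC.
have Eh : has_ubound E by exists eps.
pose sm := sup E.
have hA b : b < 0 -> sl b <= sm by move=> b0; apply: ub_le_sup => //; exists b.
have hB' d : 0 < d -> sm <= sl d.
  by move=> d0; apply: ge_sup => // x [b b0 ->]; exact: hB.
have smeps : sm <= eps by apply: ge_sup.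
exists (Num.max sm (- eps)); split.
  apply/andP; split; first by rewrite le_max lexx orbT.
  by rewrite ge_max smeps /=; lra.
move=> b.
have [b0|b0|->] := ltgtP b 0; last by rewrite mulr0 addr0.
  have h1 := slE b (negbT (lt_eqF b0)).
  have h2 : sl b <= Num.max sm (- eps) by rewrite le_max hA.
  nra.
have h1 := slE b (negbT (gt_eqF b0)).
have h2 : Num.max sm (- eps) <= sl b by rewrite ge_max hB' //= hD.
nra.
Qed.


Lemma good_neg a eps c : good a eps c -> good (fun b => a (- b)) eps c.
Proof.
case=> eps0 c0 a0 alip aconv; split => //.
  by move=> x y; have := alip (- x) (- y); rewrite -opprD normrN.
move=> x y t ht; rewrite opprD -!mulrN; exact: aconv.
Qed.

Lemma saddle a eps c : good a eps c -> exists al, 0 <= al <= 1 /\ exists bs,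
  (forall b, a bs + eps * phi c al bs <= a b + eps * phi c al b) /\
  (forall al', 0 <= al' <= 1 -> phi c al' bs <= phi c al bs).
Proof.
move=> G; have [bs hmin] := W_min G; have G' := G; case: G' => eps0 c0 a0 alip aconv.
have [bpos|bneg|bz] := ltgtP 0 bs.
- exists 0; split; first by rewrite lexx ler01.
  exists bs; split.
    by move=> b; rewrite /phi !mul0r !add0r !subr0 !mul1r; exact: pos_case.
  move=> al' /andP[h0 h1]; rewrite /phi mul0r add0r subr0 mul1r.
  have m1 : mx0 (c - bs) <= c + bs by apply: mx0_le; lra.
  have m2 : mx0 (c + bs) = c + bs by rewrite mx0_id //; lra.
  rewrite m2; nra.
- exists 1; split; first by rewrite lexx ler01.
  exists bs; split.
    move=> b; rewrite /phi !subrr !mul0r !addr0 !mul1r.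
    have hmin' b' : W (fun b => a (- b)) eps c (- bs) <= W (fun b => a (- b)) eps c b'.
      by rewrite /W !normrN opprK; have := hmin (- b'); rewrite /W normrN.
    have := pos_case (good_neg G) (bs := - bs) ltac:(lra) hmin' (- b).
    by rewrite !opprK.
  move=> al' /andP[h0 h1]; rewrite /phi subrr mul0r addr0 mul1r.
  have m1 : mx0 (c + bs) <= c - bs by apply: mx0_le; lra.
  have m2 : mx0 (c - bs) = c - bs by rewrite mx0_id //; lra.
  rewrite m2; nra.
- subst bs.
  have [s [/andP[s1 s2] hs]] := zero_case G hmin.
  have q1 : -1 <= s / eps by rewrite ler_pdivlMr //; lra.
  have q2 : s / eps <= 1 by rewrite ler_pdivrMr //; lra.
  exists ((1 + s / eps) / 2); split; first by apply/andP; split; lra.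
  exists 0.
  have phi0 al : phi c al 0 = c by rewrite /phi subr0 addr0 mx0_id; [ring|lra].
  split; last by move=> al' _; rewrite !phi0.
  move=> b; rewrite phi0.
  set al := (1 + s / eps) / 2.
  have al0 : 0 <= al <= 1 by rewrite /al; apply/andP; split; lra.
  case/andP: al0 => al0 al1.
  have hp : c + (1 - 2 * al) * b <= phi c al b.
    rewrite /phi; have := mx0_ge (c - b); have := mx0_ge (c + b).
    move=> h1 h2.
    have := ler_wpM2l al0 h2; have : 0 <= 1 - al by lra.
    move=> h3 h4; have := ler_wpM2l h3 h1; nra.
  have hp' := ler_wpM2l (ltW eps0) hp.
  have hk : eps * (1 - 2 * al) = - s.
    by rewrite /al; field; rewrite gt_eqF.
  have hb := hs b.
  have : eps * (c + (1 - 2 * al) * b) = eps * c - s * b.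
    by rewrite mulrDr mulrA hk; ring.
  nra.
Qed.

End saddle.
Section meas.
Context {R : realType}.


Lemma hinge_mx0 (b : R) z : hinge 1 b z = mx0 (1 - z.2 * (z.1 + b)).
Proof. by rewrite /hinge /mx0 mul1r. Qed.

Lemma hinge_meas d (T : measurableType d) (f1 f2 : T -> R) (b : R) :
  measurable_fun setT f1 -> measurable_fun setT f2 ->
  measurable_fun setT (fun z => hinge 1 b (f1 z, f2 z)).
Proof.
move=> m1 m2.
have : measurable_fun setT ((cst 0%R) \max ((cst 1%R) \- (f2 \* ((cst 1%R \* f1) \+ cst b)))).
  apply: measurable_realfun.measurable_maxr => //.
  apply: measurable_realfun.measurable_funB => //.
  apply: measurable_realfun.measurable_funM => //.
  apply: measurable_realfun.measurable_funD => //.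
  exact: measurable_realfun.measurable_funM.
by [].
Qed.

End meas.
Section fam.
Context {R : realType}.

Lemma mx0_lip (u v : R) : mx0 v <= mx0 u + `|u - v|.
Proof.
apply: mx0_le; first by apply: addr_ge0 => //; exact: mx0_ge0.
have := mx0_ge u; have := ler_norm (u - v); rewrite distrC; move=> h1 h2.
have := ler_norm (v - u); lra.
Qed.

Definition famP d (T : measurableType d) (h : R -> T -> R) :=
  [/\ forall b x, 0 <= h b x, forall b, measurable_fun setT (h b),
   forall b b' x, h b' x <= h b x + `|b - b'| &
   forall b1 b2 t x, 0 <= t <= 1 ->
     h (t * b1 + (1 - t) * b2) x <= t * h b1 x + (1 - t) * h b2 x].

Lemma int_lip d (T : measurableType d) (P : probability T R) h : famP h ->
  forall b b', (\int[P]_x (h b' x)%:E <= \int[P]_x (h b x)%:E + `|b - b'|%:E)%E.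
Proof.
case=> h0 hm hl hc b b'.
apply: (@le_trans _ _ (\int[P]_x ((h b x)%:E + (`|b - b'|)%:E))%E).
  apply: ge0_le_integral => //.
  - by move=> x _; rewrite lee_fin.
  - by apply/measurable_EFinP; exact: hm.
  - apply: emeasurable_funD => //; by apply/measurable_EFinP; exact: hm.
  - by move=> x _; rewrite -EFinD lee_fin.
rewrite ge0_integralD //.
- rewrite integral_cst //; apply: leeD => //; rewrite muleC; apply: gee_pMl => //; [|exact: probability_le1].
  by rewrite ge0_fin_numE ?(le_lt_trans (probability_le1 _ _)) ?ltry ?measure_ge0.
- by move=> x _; rewrite lee_fin.
- by apply/measurable_EFinP; exact: hm.
Qed.

Lemma int_conv d (T : measurableType d) (P : probability T R) h : famP h ->
  forall b1 b2 t, 0 <= t <= 1 ->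
  (\int[P]_x (h (t * b1 + (1 - t) * b2) x)%:E <=
   t%:E * \int[P]_x (h b1 x)%:E + (1 - t)%:E * \int[P]_x (h b2 x)%:E)%E.
Proof.
case=> h0 hm hl hc b1 b2 t /andP[t0 t1].
have t1' : 0 <= 1 - t by lra.
apply: (@le_trans _ _ (\int[P]_x (t%:E * (h b1 x)%:E + (1 - t)%:E * (h b2 x)%:E))%E).
  apply: ge0_le_integral => //.
  - by move=> x _; rewrite lee_fin.
  - by apply/measurable_EFinP; exact: hm.
  - apply: emeasurable_funD => //; apply: emeasurable_funM => //;
      by apply/measurable_EFinP; exact: hm.
  - by move=> x _; rewrite -!EFinM -EFinD lee_fin hc //; apply/andP.
rewrite ge0_integralD //.
- rewrite ge0_integralZl //; last by move=> x _; rewrite lee_fin.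
    rewrite ge0_integralZl //; last by move=> x _; rewrite lee_fin.
    by apply/measurable_EFinP; exact: hm.
  by apply/measurable_EFinP; exact: hm.
- by move=> x _; rewrite -EFinM lee_fin mulr_ge0.
- by apply: emeasurable_funM => //; apply/measurable_EFinP; exact: hm.
- by move=> x _; rewrite -EFinM lee_fin mulr_ge0.
- by apply: emeasurable_funM => //; apply/measurable_EFinP; exact: hm.
Qed.

End fam.
Section dich.
Context {R : realType}.

Lemma int_dich d (T : measurableType d) (P : probability T R) (h : R -> T -> R) : famP h ->
  (forall b, (\int[P]_x (h b x)%:E)%E = +oo%E) \/
  exists i : R -> R, (forall b, (\int[P]_x (h b x)%:E)%E = (i b)%:E) /\
    (forall b, 0 <= i b) /\ (forall x y, i y <= i x + `|x - y|) /\
    (forall x y t, 0 <= t <= 1 -> i (t * x + (1 - t) * y) <= t * i x + (1 - t) * i y).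
Proof.
move=> F.
have I0 b : (0 <= \int[P]_x (h b x)%:E)%E.
  by apply: integral_ge0 => x _; rewrite lee_fin; case: F => + _ _ _; apply.
have IL := int_lip P F.
have IC := int_conv P F.
have [H|H] := eqVneq (\int[P]_x (h 0 x)%:E)%E +oo%E.
  left => b; have := IL b 0; rewrite H leye_eq.
  move: (I0 b); case: (\int[P]_x (h b x)%:E)%E => // r _.

right.
have fin0 : (\int[P]_x (h 0 x)%:E)%E \is a fin_num.
  by rewrite ge0_fin_numE // ltey.
have fin b : (\int[P]_x (h b x)%:E)%E \is a fin_num.
  rewrite ge0_fin_numE //; apply: (le_lt_trans (IL 0 b)).
  by rewrite -(fineK fin0) -EFinD ltry.
exists (fun b => fine (\int[P]_x (h b x)%:E)%E).
split; first by move=> b; rewrite fineK.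
split; first by move=> b; rewrite -lee_fin fineK.
split.
  move=> x y; have := IL x y; rewrite -(fineK (fin x)) -(fineK (fin y)).
  by rewrite -EFinD lee_fin.
move=> x y t ht; have := IC x y t ht.
rewrite -(fineK (fin x)) -(fineK (fin y)) -(fineK (fin (t * x + (1 - t) * y))).
by rewrite -!EFinM -EFinD lee_fin.
Qed.

Lemma hinge_fam d (T : measurableType d) (f1 f2 : T -> R) :
  measurable_fun setT f1 -> measurable_fun setT f2 -> (forall z, `|f2 z| = 1) ->
  famP (fun b z => hinge 1 b (f1 z, f2 z)).
Proof.
move=> m1 m2 n2; split.
- by move=> b x; rewrite hinge_mx0 mx0_ge0.
- by move=> b; exact: hinge_meas.
- move=> b b' x; rewrite !hinge_mx0 /=.
  apply: (le_trans (mx0_lip (1 - f2 x * (f1 x + b)) _)).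
  rewrite lerD2l.
  have -> : 1 - f2 x * (f1 x + b) - (1 - f2 x * (f1 x + b')) = f2 x * (b' - b) by ring.
  by rewrite normrM n2 mul1r distrC.
- move=> b1 b2 t x ht; rewrite !hinge_mx0 /=.
  have -> : 1 - f2 x * (f1 x + (t * b1 + (1 - t) * b2)) =
    t * (1 - f2 x * (f1 x + b1)) + (1 - t) * (1 - f2 x * (f1 x + b2)) by ring.
  exact: mx0_conv.
Qed.

End dich.
Section nu.
Context {R : realType} (u al : R) (h0 : 0 <= al) (h1 : 0 <= 1 - al).

Definition nuA : set (R * R)%type -> \bar R :=
  measure_add (mscale (NngNum h0) (\d_((- u, 1) : R * R)))
              (mscale (NngNum h1) (\d_((u, -1) : R * R))).

HB.instance Definition _ := Measure.on nuA.

Lemma nuA_setT : nuA setT = 1%E.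
Proof.
rewrite /nuA measure_addE /= /mscale /= !diracE !in_setT !mule1 -EFinD.
by rewrite addrC subrK.
Qed.

Lemma nuA_eq A : nuA A = (al%:E * \d_((- u, 1)%R : R * R) A + (1 - al)%:E * \d_((u, -1)%R : R * R) A)%E.
Proof. by rewrite /nuA measure_addE /= /mscale /=. Qed.

HB.instance Definition _ := Measure_isProbability.Build _ _ _ nuA nuA_setT.

Lemma nuA_is_nu : is_nu u al nuA.
Proof. move=> A mA; exact: nuA_eq. Qed.

Lemma nuA_int (f : R * R -> R) : (forall z, 0 <= f z) -> measurable_fun setT f ->
  (\int[nuA]_z (f z)%:E = (al * f (- u, 1) + (1 - al) * f (u, -1))%:E)%E.
Proof.
move=> f0 mf.
have mf' : measurable_fun setT (fun z => (f z)%:E) by apply/measurable_EFinP.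
rewrite /nuA ge0_integral_measure_add //; last by move=> z _; rewrite lee_fin.
rewrite !ge0_integral_mscale //; try by move=> z _; rewrite lee_fin.
rewrite !integral_dirac // !diracT !mul1e /=.
by rewrite -!EFinM -EFinD.
Qed.

End nu.
Section Qb.
Context {R : realType}.

Lemma Q_bound (u : R) (mu : probability (R * R)%type R) : 0 < u -> inQ u mu ->
  exists p : R, 0 <= p <= 1 /\
    forall b, (Lmu mu 1 b <= (phi (1 + u) p b)%:E)%E.
Proof.
move=> u0 hQ.
pose Sp : set (R * R) := [set` `[- u, u]] `*` [set 1].
pose Sm : set (R * R) := [set` `[- u, u]] `*` [set -1].
have mSp : measurable Sp by apply: measurableX; [exact: measurable_itv| exact: measurable_set1].
have mSm : measurable Sm by apply: measurableX; [exact: measurable_itv| exact: measurable_set1].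
have SE : [set z : R * R | - u <= z.1 <= u /\ (z.2 = -1 \/ z.2 = 1)] = Sp `|` Sm.
  apply/seteqP; split => -[x y] /=.
    move=> [hx [->|->]]; [right|left]; by split => //=; rewrite in_itv.
  by case=> -[/= hx hy]; (split; [by rewrite in_itv in hx|]); [right|left].
have dSS : Sp `&` Sm = set0.
  apply/seteqP; split => -[x y] //= [[_ /= h1] [_ /= h2]].
  by move: h2; rewrite h1 => /eqP; rewrite -subr_eq0 opprK (_ : 1 + 1 = 2) // pnatr_eq0.
have hS : (mu Sp + mu Sm = 1)%E.
  by rewrite -measureU // -SE.
have Sp0 : (0 <= mu Sp)%E := measure_ge0 _ _.
have Sm0 : (0 <= mu Sm)%E := measure_ge0 _ _.
have Sp1 : (mu Sp <= 1)%E := probability_le1 _ mSp.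
have Spf : mu Sp \is a fin_num by rewrite ge0_fin_numE // (le_lt_trans Sp1) // ltry.
have Smf : mu Sm \is a fin_num.
  by rewrite ge0_fin_numE // (le_lt_trans (probability_le1 _ mSm)) // ltry.
exists (fine (mu Sp)).
have hSm : mu Sm = (1 - fine (mu Sp))%:E.
  by rewrite EFinB fineK // -hS addeAC subee // add0e.
split.
  by apply/andP; split; [rewrite -lee_fin fineK|rewrite -lee_fin fineK].
move=> b.
set fp := mx0 (1 + u - b); set fm := mx0 (1 + u + b).
have fp0 : 0 <= fp by exact: mx0_ge0.
have fm0 : 0 <= fm by exact: mx0_ge0.
pose g (z : R * R) := fp * \1_Sp z + fm * \1_Sm z.
have mg : measurable_fun setT (fun z => (g z)%:E).
  apply/measurable_EFinP; apply: measurable_funD => //;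
  apply: measurable_funM => //; exact: measurable_indic.
have mh : measurable_fun setT (fun z : R * R => (hinge 1 b z)%:E).
  apply/measurable_EFinP.
  exact: (hinge_meas b (@measurable_fst _ _ R R) (@measurable_snd _ _ R R)).
apply: (@le_trans _ _ (\int[mu]_z (g z)%:E)%E).
  apply: ae_ge0_le_integral => //.
  - by move=> z _; rewrite lee_fin hinge_mx0 mx0_ge0.
  - by move=> z _; rewrite lee_fin /g addr_ge0 // mulr_ge0.
  - exists (~` (Sp `|` Sm)); split.
    + by apply: measurableC; apply: measurableU.
    + have h := @probability_setC _ _ _ mu (Sp `|` Sm) ltac:(by apply: measurableU).
      by rewrite -SE hQ subee // in h; rewrite -SE; exact: h.
    + move=> [x y] /= H HS; apply: H => _.
      rewrite lee_fin hinge_mx0 /g /=.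
      case: HS => [[hx hy]|[hx hy]]; move: hx hy; rewrite /= in_itv /= => /andP[hx1 hx2] hy.
        have -> : \1_Sp (x, y) = 1 :> R by rewrite indicE mem_set //; split => //=; rewrite in_itv /= hx1 hx2.
        have -> : \1_Sm (x, y) = 0 :> R.
          rewrite indicE memNset // => -[_ /=]; rewrite hy => /eqP.
          by rewrite -subr_eq0 opprK (_ : 1 + 1 = 2) // pnatr_eq0.
        rewrite mulr1 mulr0 addr0 hy mul1r /fp.
        apply: mx0_le => //; have := mx0_ge (1 + u - b); lra.
      have -> : \1_Sm (x, y) = 1 :> R by rewrite indicE mem_set //; split => //=; rewrite in_itv /= hx1 hx2.
      have -> : \1_Sp (x, y) = 0 :> R.
        rewrite indicE memNset // => -[_ /=]; rewrite hy => /eqP.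
        by rewrite eq_sym -subr_eq0 opprK (_ : 1 + 1 = 2) // pnatr_eq0.
      rewrite mulr1 mulr0 add0r hy mulN1r opprK /fm.
      apply: mx0_le => //; have := mx0_ge (1 + u + b); lra.
rewrite /g.
under eq_integral do rewrite EFinD !EFinM.
have mIp : measurable_fun setT (fun z => (\1_Sp z : R)%:E).
  by apply/measurable_EFinP; exact: measurable_indic.
have mIm : measurable_fun setT (fun z => (\1_Sm z : R)%:E).
  by apply/measurable_EFinP; exact: measurable_indic.
have Ip0 : forall z, setT z -> (0 <= (\1_Sp z : R)%:E)%E.
  by move=> z _; rewrite lee_fin indicE.
have Im0 : forall z, setT z -> (0 <= (\1_Sm z : R)%:E)%E.
  by move=> z _; rewrite lee_fin indicE.
have fp0' : (0 <= fp%:E)%E by rewrite lee_fin.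
have fm0' : (0 <= fm%:E)%E by rewrite lee_fin.
rewrite ge0_integralD //.
- rewrite ge0_integralZl // ge0_integralZl //.
  rewrite !integral_indic // !setIT.
  suff H : forall X Y : \bar R, X = (fine (mu Sp))%:E -> Y = (1 - fine (mu Sp))%:E ->
    (fp%:E * X + fm%:E * Y <= (phi (1 + u) (fine (mu Sp)) b)%:E)%E.
    by apply: H; [exact: (esym (fineK Spf)) | exact: hSm].
  move=> X Y -> ->; rewrite -!EFinM -EFinD lee_fin /phi /fp /fm.
  by rewrite [1 + u - b]addrC -addrA [_ * mx0 _]mulrC [(1 - _) * _]mulrC addrC.
- by move=> z _; rewrite -EFinM lee_fin mulr_ge0 // indicE.
- by apply: emeasurable_funM.
- by move=> z _; rewrite -EFinM lee_fin mulr_ge0 // indicE.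
- by apply: emeasurable_funM.
Qed.

End Qb.
Lemma Lnu_eq {R : realType} (u al : R) (h0 : 0 <= al) (h1 : 0 <= 1 - al) b :
  Lmu (nuA u h0 h1) 1 b = (phi (1 + u) al b)%:E.
Proof.
rewrite /Lmu nuA_int.
- rewrite !hinge_mx0 /= /phi mul1r mulN1r opprK.
  rewrite (_ : 1 - (- u + b) = 1 + u - b :> R); last by ring.
  by rewrite addrA.
- by move=> z; rewrite hinge_mx0 mx0_ge0.
- exact: (hinge_meas b (@measurable_fst _ _ R R) (@measurable_snd _ _ R R)).
Qed.

Lemma Lmu_ge0 {R : realType} (mu : probability (R * R)%type R) b : (0 <= Lmu mu 1 b)%E.
Proof. by apply: integral_ge0 => z _; rewrite lee_fin hinge_mx0 mx0_ge0. Qed.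

Theorem mainTheorem5 (R : realType) (g1 g2 s u eps : R) :
  0 < s -> 0 < u -> `|g1 + g2| <= 2 * u -> 0 < eps ->
  exists alpha : R, 0 <= alpha <= 1 /\
    exists nu : probability (R * R)%type R, is_nu u alpha nu /\
    exists bnu : R, is_argmin (Jobj g1 g2 s eps nu) bnu /\
    forall mu : probability (R * R)%type R, inQ u mu ->
      forall b : R, is_argmin (Jobj g1 g2 s eps mu) b ->
        (Jobj g1 g2 s eps mu b <= Jobj g1 g2 s eps nu bnu)%E.
Proof.
move=> s0 u0 _ eps0.
have F1 : famP (fun b (x : R) => hinge 1 b (x, -1)).
  apply: (@hinge_fam R _ R id (cst (-1))).
  - exact: measurable_id.
  - exact: measurable_cst.
  - by move=> z; rewrite normrN1.
have F2 : famP (fun b (x : R) => hinge 1 b (x, 1)).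
  apply: (@hinge_fam R _ R id (cst 1)).
  - exact: measurable_id.
  - exact: measurable_cst.
  - by move=> z; rewrite normr1.
have LmixE b : Lmix (2^-1) g1 g2 s s 1 b =
  ((2^-1)%:E * \int[normal_prob g1 s]_x (hinge 1 b (x, -1))%:E +
   (1 - 2^-1)%:E * \int[normal_prob g2 s]_x (hinge 1 b (x, 1))%:E)%E by [].
have I0 (P : probability R R) (y : R) b : (0 <= \int[P]_x (hinge 1 b (x, y))%:E)%E.
  by apply: integral_ge0 => x _; rewrite lee_fin hinge_mx0 mx0_ge0.
have h2 : (0 < 2^-1 :> R) by rewrite invr_gt0.
have ge0ninf (x : \bar R) : (0 <= x)%E -> x != -oo%E.
  by move=> h; rewrite gt_eqF // (lt_le_trans _ h) // ltNy0.
have h2' : (0 < 1 - 2^-1 :> R).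
  by rewrite subr_gt0 invf_lt1 // ltr1n.
have inf_case : (forall b, Lmix (2^-1) g1 g2 s s 1 b = +oo%E) ->
    exists alpha : R, 0 <= alpha <= 1 /\
    exists nu : probability (R * R)%type R, is_nu u alpha nu /\
    exists bnu : R, is_argmin (Jobj g1 g2 s eps nu) bnu /\
    forall mu : probability (R * R)%type R, inQ u mu ->
      forall b : R, is_argmin (Jobj g1 g2 s eps mu) b ->
        (Jobj g1 g2 s eps mu b <= Jobj g1 g2 s eps nu bnu)%E.
  move=> Hinf.
  have Jinf (mu : probability (R * R)%type R) b : Jobj g1 g2 s eps mu b = +oo%E.
    rewrite /Jobj Hinf addye // gt_eqF // (lt_le_trans _ (mule_ge0 _ (Lmu_ge0 mu b))) //.
    by rewrite lee_fin ltW.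
  have a0 : (0 : R) <= 0 by [].
  have a1 : (0 : R) <= 1 - 0 by rewrite subr0.
  exists 0; split; first by rewrite lexx ler01.
  exists (nuA u a0 a1); split; first exact: nuA_is_nu.
  exists 0; split; first by move=> b'; rewrite !Jinf.
  by move=> mu _ b _; rewrite !Jinf.
have [H1|[i1 [i1E [i10 [i1L i1C]]]]] := int_dich (normal_prob g1 s) F1.
  apply: inf_case => b; rewrite LmixE H1 mulry gtr0_sg // mul1e addye //.
  apply: ge0ninf; apply: mule_ge0; first by rewrite lee_fin ltW.
  by apply: integral_ge0 => x _; rewrite lee_fin hinge_mx0 mx0_ge0.
have [H2|[i2 [i2E [i20 [i2L i2C]]]]] := int_dich (normal_prob g2 s) F2.
  apply: inf_case => b; rewrite LmixE H2 mulry gtr0_sg // mul1e addey //.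
  apply: ge0ninf; apply: mule_ge0; first by rewrite lee_fin ltW.
  by apply: integral_ge0 => x _; rewrite lee_fin hinge_mx0 mx0_ge0.
pose a b := 2^-1 * i1 b + (1 - 2^-1) * i2 b.
have aE b : Lmix (2^-1) g1 g2 s s 1 b = (a b)%:E.
  by rewrite LmixE i1E i2E -!EFinM -EFinD.
have G : good a eps (1 + u).
  split => //.
  - by rewrite addr_gt0.
  - by move=> b; rewrite /a addr_ge0 // mulr_ge0 // ltW.
  - move=> x y; rewrite /a.
    have := ler_wpM2l (ltW h2) (i1L x y); have := ler_wpM2l (ltW h2') (i2L x y).
    rewrite !mulrDr => e1 e2.
    have -> : `|x - y| = 2^-1 * `|x - y| + (1 - 2^-1) * `|x - y| by ring.
    lra.
  - move=> x y t ht; rewrite /a.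
    have := ler_wpM2l (ltW h2) (i1C x y t ht); have := ler_wpM2l (ltW h2') (i2C x y t ht).
    move=> e1 e2.
    have -> : t * (2^-1 * i1 x + (1 - 2^-1) * i2 x) + (1 - t) * (2^-1 * i1 y + (1 - 2^-1) * i2 y)
      = 2^-1 * (t * i1 x + (1 - t) * i1 y) + (1 - 2^-1) * (t * i2 x + (1 - t) * i2 y) by ring.
    exact: lerD.
have [al [/andP[al0 al1] [bs [Hmin Hmax]]]] := saddle G.
have a1 : 0 <= 1 - al by rewrite subr_ge0.
have JnuE b : Jobj g1 g2 s eps (nuA u al0 a1) b = (a b + eps * phi (1 + u) al b)%:E.
  by rewrite /Jobj aE Lnu_eq -EFinM -EFinD.
exists al; split; first by apply/andP.
exists (nuA u al0 a1); split; first exact: nuA_is_nu.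
exists bs; split.
  by move=> b'; rewrite !JnuE lee_fin Hmin.
move=> mu hQ b hb.
have [p [hp Hp]] := Q_bound u0 hQ.
apply: (le_trans (hb bs)).
rewrite JnuE /Jobj aE.
apply: (@le_trans _ _ ((a bs)%:E + eps%:E * (phi (1 + u) p bs)%:E)%E).
  by rewrite leeD2l // lee_wpmul2l // lee_fin ltW.
rewrite -EFinM -EFinD lee_fin lerD2l; apply: ler_wpM2l; [exact: ltW | exact: Hmax].
Qed.
Print Assumptions mainTheorem5.
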